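(* For non-negative integers $m$ and $n$, \[ \overline{{m+n \brack n}}_{q,t} = \sum_{k=0}^{\min\{m,n\}} t^k q^{\frac{k(k+1)}{2}} \frac{(q;q)_{m+n-k}}{(q;q)_k(q;q)_{m-k}(q;q)_{n-k}}. \]
   Context: An overpartition is a partition in which the last occurrence of each distinct part size may be overlined; its weight $|\lambda|$ is the sum of its parts. $\overline{{m+n \brack n}}_{q,t}=\sum_{\lambda} t^{\#_o(\lambda)} q^{|\lambda|}$, the sum over all overpartitions $\lambda$ with largest part at most $m$ and at most $n$ parts, $\#_o(\lambda)$ being the number of overlined parts. $(q;q)_k=\prod_{j=1}^k(1-q^j)$. *)

(* Defs.v *)
From mathcomp Require Import all_boot all_order all_algebra.
Set Implicit Arguments. Unset Strict Implicit. Unset Printing Implicit Defensive.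
Import GRing.Theory.
Local Open Scope ring_scope.

(* An overpartition is encoded as the list of its parts in nonincreasing
   order, each part paired with a flag "is overlined". *)
Fixpoint last_occ_ovl (s : seq (nat * bool)) : bool :=
  match s with
  | x :: ((y :: _) as s') => ((x.1 == y.1) ==> ~~ x.2) && last_occ_ovl s'
  | _ => true
  end.

Definition is_overpartition (s : seq (nat * bool)) : bool :=
  [&& all (fun p => 0 < p.1)%N s,
      sorted (fun x y => y.1 <= x.1)%N s & last_occ_ovl s].

Definition op_weight (s : seq (nat * bool)) : nat := sumn (map fst s).
Definition op_novl (s : seq (nat * bool)) : nat := count snd s.

Definition op_seq m k (u : k.-tuple ('I_m.+1 * bool)) : seq (nat * bool) :=
  map (fun p => (nat_of_ord p.1, p.2)) u.

(* \overline{[m+n, n]}_{q,t}: sum over overpartitions with largest part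
   <= m and at most n parts (k = number of parts). *)
Definition overgauss (R : comNzRingType) (m n : nat) (q t : R) : R :=
  \sum_(k < n.+1) \sum_(u : k.-tuple ('I_m.+1 * bool) | is_overpartition (op_seq u))
     t ^+ op_novl (op_seq u) * q ^+ op_weight (op_seq u).

Definition qpoch (R : comNzRingType) (q : R) (k : nat) : R :=
  \prod_(1 <= j < k.+1) (1 - q ^+ j).

(* Main.v *)
Require Import Defs.
From mathcomp Require Import all_boot all_order all_algebra.
From mathcomp Require Import zify ring lra.
Import GRing.Theory.
Set Implicit Arguments. Unset Strict Implicit.
Local Open Scope ring_scope.

Lemma all_le_mono (s : seq (nat * bool)) (y X : nat) :
  all (fun x => x.1 <= y)%N s -> (y <= X)%N -> all (fun x => x.1 <= X)%N s.
Proof.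
move=> h hX; apply/allP => x xs; move/allP: h => /(_ x xs) h.
exact: leq_trans h hX.
Qed.

Lemma key_pred (a : nat) (b : bool) (c : nat) (s : seq (nat * bool)) :
  is_overpartition ((a, b) :: s) && all (fun x => x.1 <= c)%N ((a, b) :: s) =
  [&& (0 < a)%N, (a <= c)%N, is_overpartition s & all (fun x => x.1 <= a - b)%N s].
Proof.
have tr : transitive (fun x y : nat * bool => y.1 <= x.1)%N.
  by move=> x y z /= h1 h2; exact: leq_trans h2 h1.
case: s => [|[y e] s] /=.
  by rewrite /is_overpartition /= !andbT.
rewrite /is_overpartition /= !path_sortedE //=.
case hs: (all (fun x : nat * bool => (x.1 <= y)%N) s); last first.
  by rewrite /= !andbF.
have E X : (y <= X)%N && all (fun x : nat * bool => (x.1 <= X)%N) s = (y <= X)%N.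
  case hy: (y <= X)%N => //=.
  by rewrite (all_le_mono hs hy).
rewrite !E /=.
set A := all _ s. set S := sorted _ s. set L := match s with [::] => _ | _ :: _ => _ end.
case: A; case: S; case: L; case: b; rewrite /= ?andbT ?andbF //; lia.
Qed.

Section Comb.
Variables (F : fieldType) (q t : F).

Definition w (s : seq (nat * bool)) : F := t ^+ op_novl s * q ^+ op_weight s.

Lemma w_cons a (b : bool) s : w ((a, b) :: s) = t ^+ b * q ^+ a * w s.
Proof.
rewrite /w /op_novl /op_weight /= !exprD; ring.
Qed.

Definition G M k c := \sum_(u : k.-tuple ('I_M.+1 * bool) |
   is_overpartition (op_seq u) && all (fun x => x.1 <= c)%N (op_seq u)) w (op_seq u).

Lemma G_S M k c : G M k.+1 c = \sum_(x : 'I_M.+1 * bool | (0 < x.1 <= c)%N)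
   t ^+ x.2 * q ^+ x.1 * G M k (x.1 - x.2).
Proof.
rewrite /G (reindex (fun p : ('I_M.+1*bool) * k.-tuple ('I_M.+1*bool) => [tuple of p.1 :: p.2])); last first.
  exists (fun u => (thead u, [tuple of behead u])) => [[x u] _ | u _] /=.
    congr (_, _).
    by apply: val_inj.
  by rewrite -tuple_eta.
under [RHS]eq_bigr do rewrite big_distrr /=.
rewrite pair_big_dep /=.
apply: eq_big => [[[x b] u]|[[x b] u] _];
  have -> : op_seq [tuple of (x, b) :: u] = (x : nat, b) :: op_seq u by [].
  by rewrite key_pred /= andbA.
by rewrite w_cons.
Qed.
End Comb.

Section Comb2.
Variables (F : fieldType) (q t : F).

Fixpoint W k c : F := match k with
  | 0 => 1
  | k'.+1 => \sum_(1 <= a < c.+1) q ^+ a * (W k' a + t * W k' a.-1)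
  end.

Lemma sum_shift M c (g : nat -> F) : (c <= M)%N ->
  \sum_(i < M.+1 | (0 < i <= c)%N) g i = \sum_(1 <= a < c.+1) g a.
Proof.
move=> hc.
rewrite -(big_mkord (fun i => (0 < i <= c)%N)) (big_nat_widen 1 c.+1 M.+1) //.
rewrite big_ltn_cond //= big_nat_cond [RHS]big_nat_cond.
by apply: eq_bigl => i; lia.
Qed.

Lemma G_W M k c : (c <= M)%N -> G q t M k c = W k c.
Proof.
elim: k c => [|k IH] c hc.
  rewrite /G (eq_bigl (pred1 [tuple])) ?big_pred1_eq.
    by rewrite /w /= mulr1.
  move=> u; have -> : u = [tuple] by exact: tuple0.
  by [] || (rewrite /= ; apply/esym/eqP).
rewrite G_S /=.
rewrite big_mkcond.
rewrite -(pair_big xpredT xpredT (fun (i : 'I_M.+1) (b : bool) => if (0 < i <= c)%N then t ^+ b * q ^+ i * G q t M k (i - b) else 0)) /=.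
rewrite -(sum_shift (fun a => q ^+ a * (W k a + t * W k a.-1)) hc) [RHS]big_mkcond.
apply: eq_bigr => i _; rewrite big_bool /=.
case: ifP => h; last by rewrite addr0.
have hi : (i <= M)%N by lia.
have hi1 : (i - 1 <= M)%N by lia.
rewrite subn0 subn1 in hi1 *.
rewrite (IH _ hi) (IH _ hi1) expr1 expr0; ring.
Qed.
End Comb2.

Section Alg.
Variables (F : fieldType) (q t : F).
Local Notation P := (qpoch q).

Lemma qpochS j : P j.+1 = P j * (1 - q ^+ j.+1).
Proof. by rewrite /qpoch big_nat_recr. Qed.

Lemma qpoch0 : P 0 = 1.
Proof. by rewrite /qpoch big_geq. Qed.

Lemma eS k : ((k.+1 * k.+2) %/ 2 = (k * k.+1) %/ 2 + k.+1)%N.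
Proof.
have -> : (k.+1 * k.+2 = k.+1 * 2 + k * k.+1)%N by ring.
by rewrite divnMDl // addnC.
Qed.

Definition T m n k := t ^+ k * q ^+ ((k * k.+1) %/ 2) * P (m + n - k)
       / (P k * P (m - k) * P (n - k)).
Definition T' m n k := if (k <= m)%N && (k <= n)%N then T m n k else 0.

Variable B : nat.
Hypothesis hP : forall j, (j <= B)%N -> P j != 0.

Lemma nz1 j : (j.+1 <= B)%N -> 1 - q ^+ j.+1 != 0.
Proof. by move=> h; move: (hP h); rewrite qpochS mulf_eq0 negb_or => /andP[]. Qed.

Definition X k a b := t ^+ k.+1 * q ^+ ((k * k.+1) %/ 2 + k.+1) * P (k + a + b)
   / (P k.+1 * P a * P b).

Ltac nzs := rewrite ?hP ?nz1 //; lia.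

Lemma L1 k a b : ((k + a + b).+1 <= B)%N ->
  T' (k + a).+1 (k + b).+1 k.+1 = X k a b * (1 - q ^+ (k + a + b).+1).
Proof.
move=> hB; rewrite /T' ifT; last by lia.
rewrite /T /X.
have -> : ((k + a).+1 + (k + b).+1 - k.+1 = (k + a + b).+1)%N by lia.
have -> : ((k + a).+1 - k.+1 = a)%N by lia.
have -> : ((k + b).+1 - k.+1 = b)%N by lia.
rewrite eS qpochS.
field; nzs.
Qed.

Lemma L2 k a b : ((k + a + b).+1 <= B)%N ->
  T' (k + a) (k + b).+1 k.+1 = X k a b * (1 - q ^+ a).
Proof.
move=> hB; case: a hB => [|a] hB.
  rewrite /T' ifF; last by lia.
  by rewrite expr0 subrr mulr0.
rewrite /T' ifT; last by lia.
rewrite /T /X.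
have -> : ((k + a.+1) + (k + b).+1 - k.+1 = (k + a.+1 + b))%N by lia.
have -> : ((k + a.+1) - k.+1 = a)%N by lia.
have -> : ((k + b).+1 - k.+1 = b)%N by lia.
rewrite eS (qpochS a).
field; nzs.
Qed.

Lemma L3 k a b : ((k + a + b).+1 <= B)%N ->
  q ^+ (k + a).+1 * T' (k + a).+1 (k + b) k.+1 = X k a b * (q ^+ (k + a).+1 * (1 - q ^+ b)).
Proof.
move=> hB; case: b hB => [|b] hB.
  rewrite /T' ifF; last by lia.
  by rewrite expr0 subrr !mulr0.
rewrite /T' ifT; last by lia.
rewrite /T /X.
have -> : ((k + a).+1 + (k + b.+1) - k.+1 = (k + a + b.+1))%N by lia.
have -> : ((k + a).+1 - k.+1 = a)%N by lia.
have -> : ((k + b.+1) - k.+1 = b)%N by lia.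
rewrite eS (qpochS b).
field; nzs.
Qed.

Lemma L4 k a b : ((k + a + b).+1 <= B)%N ->
  q ^+ (k + a).+1 * (t * T' (k + a) (k + b) k) = X k a b * (q ^+ a * (1 - q ^+ k.+1)).
Proof.
move=> hB; rewrite /T' ifT; last by lia.
rewrite /T /X.
have -> : ((k + a) + (k + b) - k = (k + a + b))%N by lia.
have -> : ((k + a) - k = a)%N by lia.
have -> : ((k + b) - k = b)%N by lia.
have -> : ((k + a).+1 = k.+1 + a)%N by lia.
rewrite (qpochS k) !exprD exprS.
set e := q ^+ _. rewrite !exprS. field; rewrite /e -?exprS; nzs.
Qed.

Lemma TS m n k : (m + n + 2 <= B)%N ->
  T' m.+1 n.+1 k.+1 = T' m n.+1 k.+1 + q ^+ m.+1 * T' m.+1 n k.+1 + q ^+ m.+1 * (t * T' m n k).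
Proof.
move=> hB.
case: (boolP ((k <= m) && (k <= n))%N) => h; last first.
  rewrite /T'.
  have -> : ((k.+1 <= m.+1) && (k.+1 <= n.+1))%N = false by lia.
  have -> : ((k.+1 <= m) && (k.+1 <= n.+1))%N = false by lia.
  have -> : ((k.+1 <= m.+1) && (k.+1 <= n))%N = false by lia.
  by rewrite !mulr0 !addr0.
have [a ea] : exists a, m = (k + a)%N by exists (m - k)%N; lia.
have [b eb] : exists b, n = (k + b)%N by exists (n - k)%N; lia.
subst m n.
have hB' : ((k + a + b).+1 <= B)%N by lia.
rewrite L1 // L2 // L3 // L4 //.
have -> : ((k + a + b).+1 = k.+1 + a + b)%N by lia.
have -> : ((k + a).+1 = k.+1 + a)%N by lia.
rewrite !exprD; ring.
Qed.

Lemma T0 m n : (m + n + 2 <= B)%N ->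
  T' m.+1 n.+1 0 = T' m n.+1 0 + q ^+ m.+1 * T' m.+1 n 0.
Proof.
move=> hB; rewrite /T' /= /T !subn0 !expr0 ?mul0n ?div0n ?expr0 qpoch0.
have -> : (m.+1 + n.+1 = (m + n.+1).+1)%N by lia.
have -> : (m.+1 + n = m + n.+1)%N by lia.
rewrite qpochS (qpochS m) (qpochS n).
have -> : ((m + n.+1).+1 = m.+1 + n.+1)%N by lia.
rewrite exprD.
field; nzs.
Qed.
End Alg.

Section Final.
Variables (F : fieldType) (q t : F).
Local Notation P := (qpoch q).

Lemma overgauss_W m n : overgauss m n q t = \sum_(k < n.+1) W q t k m.
Proof.
apply: eq_bigr => k _.
rewrite -(G_W q t k (leqnn m)) /G.
apply: eq_bigl => u.
suff -> : all (fun x : nat * bool => (x.1 <= m)%N) (op_seq u) by rewrite andbT.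
by apply/allP => x /mapP [p _ ->] /=; rewrite -ltnS ltn_ord.
Qed.

Definition A m n := \sum_(k < n.+1) W q t k m.

Lemma W_rec k m : W q t k.+1 m.+1 = W q t k.+1 m + q ^+ m.+1 * (W q t k m.+1 + t * W q t k m).
Proof. by rewrite /= big_nat_recr. Qed.

Lemma A_rec m n : A m.+1 n.+1 = A m n.+1 + q ^+ m.+1 * (A m.+1 n + t * A m n).
Proof.
rewrite /A big_ord_recl [X in _ = X + _]big_ord_recl.
under eq_bigr do rewrite lift0 W_rec.
under [\sum_(i < n.+1) W q t (lift ord0 i) m]eq_bigr do rewrite lift0.
rewrite big_split /= -addrA; congr (_ + (_ + _)).
by rewrite -mulr_sumr big_split /= -mulr_sumr.
Qed.

Lemma A0n n : A 0 n = 1.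
Proof.
rewrite /A big_ord_recl /= big1 ?addr0 // => i _.
by rewrite /= big_geq.
Qed.

Lemma Am0 m : A m 0 = 1.
Proof. by rewrite /A big_ord1. Qed.

Definition C m n := \sum_(k < (minn m n).+1)
     t ^+ k * q ^+ ((k * k.+1) %/ 2) * qpoch q (m + n - k)
       / (qpoch q k * qpoch q (m - k) * qpoch q (n - k)).

Lemma C_ext m n K : (minn m n < K)%N -> C m n = \sum_(k < K) T' q t m n k.
Proof.
move=> hK; rewrite /C (big_ord_widen K (fun k => T q t m n k)) // big_mkcond.
apply: eq_bigr => i _; rewrite /T'.
by rewrite ltnS leq_min.
Qed.

Lemma C_rec m n : (forall j, (j <= m + n + 2)%N -> P j != 0) ->
  C m.+1 n.+1 = C m n.+1 + q ^+ m.+1 * (C m.+1 n + t * C m n).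
Proof.
move=> hP.
set K := (m + n).+2.
rewrite (C_ext (K := K.+1)); last by lia.
rewrite (@C_ext m n.+1 K.+1); last by lia.
rewrite (@C_ext m.+1 n K.+1); last by lia.
rewrite (@C_ext m n K); last by lia.
rewrite [\sum_(k < K.+1) T' q t m.+1 n.+1 k]big_ord_recl.
rewrite [\sum_(k < K.+1) T' q t m n.+1 k]big_ord_recl.
rewrite [\sum_(k < K.+1) T' q t m.+1 n k]big_ord_recl.
rewrite (T0 t hP) //.
under eq_bigr do rewrite lift0 (TS t hP) //.
under [\sum_(i < K) T' q t m n.+1 _]eq_bigr do rewrite lift0.
under [\sum_(i < K) T' q t m.+1 n _]eq_bigr do rewrite lift0.
rewrite !big_split /= !mulrDr !mulr_sumr.
ring.
Qed.

Lemma C0n n : P n != 0 -> C 0 n = 1.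
Proof.
move=> h; rewrite /C min0n big_ord1 /= !subn0 qpoch0 !expr0 add0n.
by rewrite !mul1r divff.
Qed.

Lemma Cm0 m : P m != 0 -> C m 0 = 1.
Proof.
move=> h; rewrite /C minn0 big_ord1 /= !subn0 qpoch0 !expr0 addn0.
by rewrite !mul1r mulr1 divff.
Qed.

Lemma AC m n : (forall j, (j <= m + n)%N -> P j != 0) -> A m n = C m n.
Proof.
elim: m n => [|m IHm] n hP.
  by rewrite A0n C0n // hP.
elim: n hP => [|n IHn] hP.
  by rewrite Am0 Cm0 // hP // addn0.
rewrite A_rec C_rec; last by move=> j hj; apply: hP; lia.
rewrite IHm; last by move=> j hj; apply: hP; lia.
rewrite IHn; last by move=> j hj; apply: hP; lia.
rewrite IHm //; by move=> j hj; apply: hP; lia.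
Qed.
End Final.

Theorem theorem2p2 (F : fieldType) (q t : F) (m n : nat)
  (hq : forall j : nat, (j <= m + n)%N -> qpoch q j != 0) :
  overgauss m n q t =
  \sum_(k < (minn m n).+1)
     t ^+ k * q ^+ ((k * k.+1) %/ 2) * qpoch q (m + n - k)
       / (qpoch q k * qpoch q (m - k) * qpoch q (n - k)).
Proof.
rewrite overgauss_W; exact: (AC t hq).
Qed.
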